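(* On $\mathcal H=\mathbb C^2$ with orthonormal basis $|0\rangle,|1\rangle$, let $P_1=\frac12|0\rangle\langle0|$ and $P_2=\frac12|0\rangle\langle0|+|1\rangle\langle1|$. The POVM $\{P_1,P_2\}$ is not extremal, while the instrument $\mathcal N_i(\rho)=\sqrt{P_i}\,\rho\,\sqrt{P_i}$, $i=1,2$, is an extremal instrument.
   Context: A POVM is a family of positive operators summing to the identity; an extremal POVM is an extreme point of the convex set of POVMs with the same number of outcomes. An instrument with $M$ outcomes is a family of completely positive maps $\mathcal N_i:\mathcal L(\mathcal H)\to\mathcal L(\mathcal H)$ whose sum is trace preserving; extremal means an extreme point of the convex set of all such instruments with $M$ outcomes. *)

(* Defs.v *)
From HB Require Import structures.
From mathcomp Require Import all_boot all_order all_algebra all_field.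
Set Implicit Arguments. Unset Strict Implicit. Unset Printing Implicit Defensive.
Import Order.TTheory GRing.Theory Num.Theory.
Local Open Scope ring_scope.

Definition adj (m n : nat) (A : 'M[algC]_(m, n)) : 'M[algC]_(n, m) :=
  (map_mx Num.conj A)^T.

(* positive (semidefinite) operator on C^n; in algC, 0 <= z means z is real nonnegative *)
Definition psd (n : nat) (A : 'M[algC]_n) : Prop :=
  A = adj A /\ forall v : 'cV[algC]_n, 0 <= (adj v *m A *m v) 0 0.

(* positivity of an element of M_k (x) M_n, given as a k x k array of n x n blocks *)
Definition block_psd (k n : nat) (X : 'I_k -> 'I_k -> 'M[algC]_n) : Prop :=
  (forall i j, X j i = adj (X i j)) /\
  forall v : 'I_k -> 'cV[algC]_n,
    0 <= \sum_(i < k) \sum_(j < k) (adj (v i) *m X i j *m v j) 0 0.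

Definition linmap (n : nat) (f : 'M[algC]_n -> 'M[algC]_n) : Prop :=
  forall (a : algC) (X Y : 'M[algC]_n), f (a *: X + Y) = a *: f X + f Y.

Definition CP (n : nat) (f : 'M[algC]_n -> 'M[algC]_n) : Prop :=
  forall (k : nat) (X : 'I_k -> 'I_k -> 'M[algC]_n),
    block_psd X -> block_psd (fun i j => f (X i j)).

Definition POVM (n M : nat) (P : 'I_M -> 'M[algC]_n) : Prop :=
  (forall i, psd (P i)) /\ \sum_(i < M) P i = 1%:M.

Definition extremal_POVM (n M : nat) (P : 'I_M -> 'M[algC]_n) : Prop :=
  POVM P /\
  forall (Q R : 'I_M -> 'M[algC]_n) (t : algC),
    POVM Q -> POVM R -> 0 < t -> t < 1 ->
    (forall i, P i = t *: Q i + (1 - t) *: R i) ->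
    forall i, Q i = P i /\ R i = P i.

Definition instrument (n M : nat) (N : 'I_M -> 'M[algC]_n -> 'M[algC]_n) : Prop :=
  (forall i, linmap (N i) /\ CP (N i)) /\
  forall rho : 'M[algC]_n, \tr (\sum_(i < M) N i rho) = \tr rho.

Definition extremal_instrument (n M : nat)
    (N : 'I_M -> 'M[algC]_n -> 'M[algC]_n) : Prop :=
  instrument N /\
  forall (A B : 'I_M -> 'M[algC]_n -> 'M[algC]_n) (t : algC),
    instrument A -> instrument B -> 0 < t -> t < 1 ->
    (forall i rho, N i rho = t *: A i rho + (1 - t) *: B i rho) ->
    forall i rho, A i rho = N i rho /\ B i rho = N i rho.

Definition proj2 (j : 'I_2) : 'M[algC]_2 := delta_mx j j.
Definition P1 : 'M[algC]_2 := (1/2) *: proj2 ord0.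
Definition P2 : 'M[algC]_2 := (1/2) *: proj2 ord0 + proj2 ord_max.
Definition Pfam (i : 'I_2) : 'M[algC]_2 := if i == ord0 then P1 else P2.

(* Main.v *)
Require Import Defs.
From HB Require Import structures.
From mathcomp Require Import all_boot all_order all_algebra all_field.
From Stdlib Require Import Ring FunctionalExtensionality.
Import Order.TTheory GRing.Theory Num.Theory.
Local Open Scope ring_scope.

Notation CC := (GRing.PzSemiRing.sort Algebraics.Implementation_type__canonical__GRing_PzSemiRing) (only parsing).
Notation CC2 := (Algebra.BaseAddMagma.sort (GRing_PzSemiRing__to__Algebra_BaseAddMagma Algebraics.Implementation_type__canonical__GRing_PzSemiRing)) (only parsing).
Notation IADD := (GRing_PzSemiRing__to__Algebra_BaseAddMagma Algebraics.Implementation_type__canonical__GRing_PzSemiRing) (only parsing).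
Notation IZERO := (GRing_PzSemiRing__to__Algebra_BaseAddUMagma Algebraics.Implementation_type__canonical__GRing_PzSemiRing) (only parsing).
Notation IOPP := Algebraics.Implementation_type__canonical__Algebra_BaseZmodule (only parsing).
Notation IMUL := Algebraics.Implementation_type__canonical__GRing_PzSemiRing (only parsing).
Lemma algC_ring : @ring_theory CC (@Algebra.zero IZERO) (GRing.one IMUL) (@Algebra.add IADD) (@GRing.mul IMUL) (fun x y => @Algebra.add IADD x (@Algebra.opp IOPP y)) (@Algebra.opp IOPP) eq.
Proof. split; [exact: add0r|exact: addrC|exact: addrA|exact: mul1r|exact: mulrC|exact: mulrA|exact: mulrDl|done|exact: subrr]. Qed.
Add Ring algCr : algC_ring.
Definition algC_ring2 : @ring_theory CC2 (@Algebra.zero IZERO) (GRing.one IMUL) (@Algebra.add IADD) (@GRing.mul IMUL) (fun x y => @Algebra.add IADD x (@Algebra.opp IOPP y)) (@Algebra.opp IOPP) eq := algC_ring.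
Add Ring algCr2 : algC_ring2.
Definition algC_ring3 : @ring_theory algC (@Algebra.zero IZERO) (GRing.one IMUL) (@Algebra.add IADD) (@GRing.mul IMUL) (fun x y => @Algebra.add IADD x (@Algebra.opp IOPP y)) (@Algebra.opp IOPP) eq := algC_ring.
Add Ring algCr3 : algC_ring3.
Definition algC_ring_x0 : @ring_theory (Algebra.BaseAddUMagma.sort (GRing_PzSemiRing__to__Algebra_BaseAddUMagma IMUL)) (@Algebra.zero IZERO) (GRing.one IMUL) (@Algebra.add IADD) (@GRing.mul IMUL) (fun x y => @Algebra.add IADD x (@Algebra.opp IOPP y)) (@Algebra.opp IOPP) eq := algC_ring.
Add Ring algCrx0 : algC_ring_x0.

Ltac unif_inst :=
 repeat match goal with
 | |- context [@Algebra.add ?i] => tryif constr_eq i constr:(IADD) then fail else change (@Algebra.add i) with (@Algebra.add IADD)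
 | |- context [@Algebra.zero ?i] => tryif constr_eq i constr:(IZERO) then fail else change (@Algebra.zero i) with (@Algebra.zero IZERO)
 | |- context [@Algebra.opp ?i] => tryif constr_eq i constr:(IOPP) then fail else change (@Algebra.opp i) with (@Algebra.opp IOPP)
 | |- context [@GRing.mul ?i] => tryif constr_eq i constr:(IMUL) then fail else change (@GRing.mul i) with (@GRing.mul IMUL)
 | |- context [@GRing.one ?i] => tryif constr_eq i constr:(IMUL) then fail else change (@GRing.one i) with (@GRing.one IMUL)
 end.
Ltac cring := unif_inst; match goal with |- @eq _ ?x ?y => let T := type of x in change (@eq T x y) end; ring.

Lemma ord2 (i : 'I_2) : i = ord0 \/ i = ord_max.
Proof. case: i => [[|[|m]] Hi]; [left|right|by []]; by apply: val_inj. Qed.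

Lemma sum2 (V : nmodType) (F : 'I_2 -> V) : \sum_i F i = F ord0 + F ord_max.
Proof. rewrite big_ord_recr big_ord_recr big_ord0 /= (@add0r V). congr (F _ + F _); exact: val_inj. Qed.

Lemma e01 : (@ord0 1 == ord_max) = false. Proof. by []. Qed.
Lemma e10 : (@ord_max 1 == ord0) = false. Proof. by []. Qed.

Ltac simp2 := rewrite ?eqxx ?e01 ?e10 /= ?mulr1n ?mulr0n ?mulr1 ?mulr0 ?mul1r ?mul0r ?addr0 ?add0r ?rmorph0 ?rmorph1.

Definition D2 (a b : algC) : 'M[algC]_2 := a *: delta_mx ord0 ord0 + b *: delta_mx ord_max ord_max.

Lemma D2E a b i j : D2 a b i j = if i == j then (if i == ord0 then a else b) else 0.
Proof. rewrite !mxE; case: (ord2 i) => ->; case: (ord2 j) => ->; simp2. all: by []. Qed.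

Lemma form_eq n (u w : 'cV[algC]_n) (M : 'M[algC]_n) :
  (adj u *m M *m w) 0 0 = \sum_p \sum_q (u p 0)^* * M p q * w q 0.
Proof.
rewrite mxE (exchange_big). apply: eq_bigr => q _. rewrite mxE mulr_suml.
apply: eq_bigr => p _. by rewrite /adj !mxE.
Qed.

Lemma q_ge0 (a x : algC) : 0 <= a -> 0 <= x^* * a * x.
Proof.
move=> ha; have -> : x^* * a * x = a * (x * x^*) by cring.
by apply: mulr_ge0 => //; apply: mul_conjC_ge0.
Qed.

Lemma psd_D2 a b : 0 <= a -> 0 <= b -> psd (D2 a b).
Proof.
move=> ha hb; split.
  apply/matrixP => i j; rewrite /adj [RHS]mxE [RHS]mxE !D2E.
  case: (ord2 i) => ->; case: (ord2 j) => ->; simp2; try by rewrite geC0_conj. all: try reflexivity.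
move=> v; rewrite form_eq !sum2 !D2E; simp2.
by apply: addr_ge0; apply: q_ge0.
Qed.

Definition vec := 'I_2 -> 'I_2 -> algC.
Definition Hf (c : 'I_2 -> 'I_2 -> 'I_2 -> 'I_2 -> algC) (x y : vec) : algC :=
  \sum_i \sum_j \sum_p \sum_q (x i p)^* * c i j p q * y j q.

Lemma Hf_addl c (x z y : vec) l :
  Hf c (fun i p => x i p + l * z i p) y = Hf c x y + l^* * Hf c z y.
Proof. rewrite /Hf !sum2 !rmorphD !rmorphM /=; cring. Qed.

Lemma Hf_addr c (x y z : vec) l :
  Hf c x (fun i p => y i p + l * z i p) = Hf c x y + l * Hf c x z.
Proof. rewrite /Hf !sum2; cring. Qed.

Lemma real_lin (h a : algC) :
  (forall r : algC, r \is Num.real -> 0 <= h + r * a) -> a = 0.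
Proof.
move=> H.
have h0 : 0 <= h by have := H 0 (rpred0 _); rewrite mul0r addr0.
have h1 : 0 <= h + a by have := H 1 (rpred1 _); rewrite mul1r.
have ra : a \is Num.real.
  have -> : a = (h + a) - h by cring.
  by apply: rpredB; apply: ger0_real.
apply/eqP; apply/negP => /negP an0.
have rr : (- (h + 1) / a) \is Num.real.
  rewrite rpredM // ?rpredV // rpredN rpredD // ?rpred1 // ger0_real //.
have := H _ rr; rewrite divfK //.
have -> : h + - (h + 1) = -1 by cring.
by rewrite ler0N1.
Qed.

Lemma CS c (k : vec) : (forall x, 0 <= Hf c x x) -> Hf c k k = 0 ->
  forall y, Hf c y k = 0 /\ Hf c k y = 0.
Proof.
move=> Hp Hk y.
have E : forall l : algC, 0 <= Hf c y y + l * Hf c y k + l^* * Hf c k y.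
  move=> l; have := Hp (fun i p => y i p + l * k i p).
  by rewrite Hf_addl !Hf_addr Hk mulr0 addr0.
have s0 : Hf c y k + Hf c k y = 0.
  apply: (@real_lin (Hf c y y)) => r rr; have := E r.
  have cr : r^* = r := conj_Creal rr.
  move=> H; suff -> : Hf c y y + r * (Hf c y k + Hf c k y) = Hf c y y + r * Hf c y k + r^* * Hf c k y by [].
  rewrite cr; cring.
have s1 : 'i * (Hf c y k - Hf c k y) = 0.
  apply: (@real_lin (Hf c y y)) => r rr; have := E ('i * r).
  have cr : r^* = r := conj_Creal rr.
  move=> H; suff -> : Hf c y y + r * ('i * (Hf c y k - Hf c k y)) = Hf c y y + 'i * r * Hf c y k + ('i * r)^* * Hf c k y by [].
  rewrite rmorphM /= cr conjCi; cring.
move: s1 => /eqP; rewrite mulf_eq0 (negbTE (neq0Ci _)) /= subr_eq0 => /eqP e.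
move: s0; rewrite e => s0.
have : 2 * Hf c k y = 0 by rewrite -s0 mulr_natl mulr2n.
move/eqP; rewrite mulf_eq0 pnatr_eq0 /= => /eqP ->; by split.
Qed.

Definition phi (s x : vec) : algC := \sum_i \sum_p s i p * x i p.
Definition ev (i0 p0 : 'I_2) : vec := fun i p => ((i == i0) && (p == p0))%:R.

Lemma phi_add s (x z : vec) l : phi s (fun i p => x i p + l * z i p) = phi s x + l * phi s z.
Proof. rewrite /phi !sum2; cring. Qed.

Lemma phi_ev s i0 p0 : phi s (ev i0 p0) = s i0 p0.
Proof. rewrite /phi /ev !sum2; case: (ord2 i0) => ->; case: (ord2 p0) => ->; simp2; done. Qed.

Lemma Hf_ev c i j p q : Hf c (ev i p) (ev j q) = c i j p q.
Proof.
rewrite /Hf /ev !sum2; case: (ord2 i) => ->; case: (ord2 j) => ->;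
  case: (ord2 p) => ->; case: (ord2 q) => ->; simp2; cring.
Qed.

Lemma Hf_lin c c' t u x y : t * Hf c x y + u * Hf c' x y =
  Hf (fun i j p q => t * c i j p q + u * c' i j p q) x y.
Proof. rewrite /Hf !sum2; cring. Qed.

Lemma Hf_N s x y : Hf (fun i j p q => (s i p)^* * s j q) x y = (phi s x)^* * phi s y.
Proof. rewrite /Hf /phi !sum2 !rmorphD !rmorphM /=; cring. Qed.

Lemma core c c' (s : vec) (t : algC) i0 p0 : 0 < t -> t < 1 ->
  (forall x, 0 <= Hf c x x) -> (forall x, 0 <= Hf c' x x) ->
  (forall i j p q, (s i p)^* * s j q = t * c i j p q + (1 - t) * c' i j p q) ->
  s i0 p0 != 0 ->
  exists mu, forall i j p q, c i j p q = mu * ((s i p)^* * s j q).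
Proof.
move=> t0 t1 Hc Hc' hrel s0.
have key : forall x y, t * Hf c x y + (1 - t) * Hf c' x y = (phi s x)^* * phi s y.
  move=> x y; rewrite Hf_lin -Hf_N; congr Hf.
  apply: functional_extensionality => i; apply: functional_extensionality => j.
  apply: functional_extensionality => p; apply: functional_extensionality => q.
  by rewrite hrel.
have ker : forall k, phi s k = 0 -> forall y, Hf c y k = 0 /\ Hf c k y = 0.
  move=> k hk; apply: CS => //.
  have := key k k; rewrite hk rmorph0 mul0r => /eqP.
  have a1 : 0 <= t * Hf c k k := mulr_ge0 (ltW t0) (Hc k).
  have a2 : 0 <= (1 - t) * Hf c' k k.
    by apply: mulr_ge0 => //; rewrite subr_ge0 ltW.
  rewrite paddr_eq0 // => /andP[] /eqP.
  move/eqP; rewrite mulf_eq0 (gt_eqF t0) /= => /eqP -> _; done.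
set e := ev i0 p0.
have dec : forall x y, Hf c x y = (phi s x / s i0 p0)^* * Hf c e y.
  move=> x y; set l := phi s x / s i0 p0.
  pose k := fun i p => x i p + (- l) * e i p.
  have hk : phi s k = 0.
    by rewrite /k phi_add /e phi_ev /l mulNr divfK // subrr.
  have xe : x = (fun i p => k i p + l * e i p).
    apply: functional_extensionality => i; apply: functional_extensionality => p.
    rewrite /k; cring.
  by rewrite {1}xe Hf_addl (ker k hk y).2 add0r.
have dec2 : forall y, Hf c e y = (phi s y / s i0 p0) * Hf c e e.
  move=> y; set l := phi s y / s i0 p0.
  pose k := fun i p => y i p + (- l) * e i p.
  have hk : phi s k = 0.
    by rewrite /k phi_add /e phi_ev /l mulNr divfK // subrr.
  have ye : y = (fun i p => k i p + l * e i p).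
    apply: functional_extensionality => i; apply: functional_extensionality => p.
    rewrite /k; cring.
  by rewrite {1}ye Hf_addr (ker k hk e).1 add0r.
exists (((s i0 p0)^-1)^* * (s i0 p0)^-1 * Hf c e e) => i j p q.
rewrite -Hf_ev dec dec2 !phi_ev rmorphM /=; cring.
Qed.

Lemma ge0_eq (y x : algC) : x = y -> 0 <= y -> 0 <= x.
Proof. by move=> ->. Qed.

Lemma adjM m n p (A : 'M[algC]_(m, n)) (B : 'M[algC]_(n, p)) : adj (A *m B) = adj B *m adj A.
Proof.
apply/matrixP => i j; rewrite /adj !mxE rmorph_sum; apply: eq_bigr => k _.
by rewrite !mxE rmorphM /= mulrC.
Qed.

Lemma delta_block : block_psd (fun i j : 'I_2 => (delta_mx i j : 'M[algC]_2)).
Proof.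
split.
  move=> i j; apply/matrixP => p q; rewrite /adj !mxE conjC_nat.
  by rewrite andbC.
move=> v; rewrite !sum2 !form_eq !sum2 !mxE; simp2.
apply: (@ge0_eq ((v ord0 ord0 0 + v ord_max ord_max 0) * (v ord0 ord0 0 + v ord_max ord_max 0)^*)); last exact: mul_conjC_ge0.
rewrite rmorphD /=; cring.
Qed.

Lemma cf_psd (f : 'M[algC]_2 -> 'M[algC]_2) : CP f ->
  forall x, 0 <= Hf (fun i j p q => f (delta_mx i j) p q) x x.
Proof.
move=> hf x; have := (hf 2 _ delta_block).2 (fun i => \col_p x i p).
rewrite /Hf !sum2 !form_eq !sum2 !mxE; by [].
Qed.

Lemma mul_delta_entry (A B : 'M[algC]_2) i j p q :
  (A *m delta_mx i j *m B) p q = A p i * B j q.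
Proof.
rewrite !mxE !sum2 !mxE !sum2 !mxE.
case: (ord2 i) => ->; case: (ord2 j) => ->; simp2; cring.
Qed.

Lemma linmap_N (S : 'M[algC]_2) : linmap (fun rho => S *m rho *m S).
Proof. by move=> a X Y; rewrite mulmxDr mulmxDl -scalemxAr -scalemxAl. Qed.

Lemma linmap_muN (S : 'M[algC]_2) mu : linmap (fun rho => mu *: (S *m rho *m S)).
Proof.
move=> a X Y; rewrite mulmxDr mulmxDl -scalemxAr -scalemxAl scalerDr !scalerA.
by rewrite mulrC.
Qed.

Lemma CP_N (S : 'M[algC]_2) : S = adj S -> CP (fun rho => S *m rho *m S).
Proof.
move=> hS k X [hX1 hX2]; split.
  move=> i j. rewrite (adjM _ _ _ (S *m X i j) S) (adjM _ _ _ S (X i j)) -hS -hX1 mulmxA.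
  done.
move=> v; have := hX2 (fun i => S *m v i).
suff -> : \sum_(i < k) \sum_(j < k) (adj (v i) *m (S *m X i j *m S) *m v j) 0 0 =
  \sum_(i < k) \sum_(j < k) (adj (S *m v i) *m X i j *m (S *m v j)) 0 0 by [].
apply: eq_bigr => i _; apply: eq_bigr => j _.
by rewrite (adjM _ _ _ S (v i)) -hS !mulmxA.
Qed.

Lemma trN (S rho : 'M[algC]_2) : \tr (S *m rho *m S) = \tr (S *m S *m rho).
Proof. by rewrite mxtrace_mulC mulmxA. Qed.

Lemma lin_ext (f g : 'M[algC]_2 -> 'M[algC]_2) : linmap f -> linmap g ->
  (forall i j, f (delta_mx i j) = g (delta_mx i j)) -> forall rho, f rho = g rho.
Proof.
have z : forall h : 'M[algC]_2 -> 'M[algC]_2, linmap h -> h 0 = 0.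
  move=> h hh; have := hh 1 0 0; rewrite !scale1r !addr0 => e.
  by apply: (@addrI _ (h 0)); rewrite -e addr0.
have sc : forall h : 'M[algC]_2 -> 'M[algC]_2, linmap h -> forall a X, h (a *: X) = a *: h X.
  move=> h hh a X; have := hh a X 0; by rewrite !addr0 (z h hh) addr0.
move=> hf hg he rho; rewrite (matrix_sum_delta rho) !sum2 -!addrA.
by rewrite !hf !hg (sc f hf) (sc g hg) !he.
Qed.

Lemma D2_mul a b c d : D2 a b *m D2 c d = D2 (a * c) (b * d).
Proof.
apply/matrixP => i j; rewrite mxE sum2 !D2E.
case: (ord2 i) => ->; case: (ord2 j) => ->; simp2; cring.
Qed.

Lemma D2_add a b c d : D2 a b + D2 c d = D2 (a + c) (b + d).
Proof.
apply/matrixP => i j; rewrite mxE !D2E.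
case: (ord2 i) => ->; case: (ord2 j) => ->; simp2; cring.
Qed.

Lemma D2_scale k a b : k *: D2 a b = D2 (k * a) (k * b).
Proof.
apply/matrixP => i j; rewrite mxE !D2E.
case: (ord2 i) => ->; case: (ord2 j) => ->; simp2; cring.
Qed.

Lemma D2_1 : (1%:M : 'M[algC]_2) = D2 1 1.
Proof.
apply/matrixP => i j; rewrite mxE !D2E.
case: (ord2 i) => ->; case: (ord2 j) => ->; simp2; cring.
Qed.

Lemma D2_inj a b c d : D2 a b = D2 c d -> a = c /\ b = d.
Proof.
move=> e; have e0 := congr1 (fun M : 'M[algC]_2 => M ord0 ord0) e.
have e1 := congr1 (fun M : 'M[algC]_2 => M ord_max ord_max) e.
move: e0 e1; rewrite /= !D2E; simp2; done.
Qed.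

Lemma D2_tr a b : \tr (D2 a b) = a + b.
Proof. rewrite /mxtrace sum2 !D2E; simp2; done. Qed.

Lemma P1D : P1 = D2 (1/2) 0.
Proof. by rewrite /P1 /D2 /proj2 scale0r addr0. Qed.

Lemma P2D : P2 = D2 (1/2) 1.
Proof. by rewrite /P2 /D2 /proj2 scale1r. Qed.

Lemma half_gt0 : (0 : algC) < 1/2.
Proof. by rewrite divr_gt0 // ?ltr01 ?ltr0n. Qed.

Lemma half_lt1 : (1/2 : algC) < 1.
Proof. by rewrite ltr_pdivrMr ?ltr0n // mul1r ltr1n. Qed.

Lemma half_half : (1/2 + 1/2 : algC) = 1.
Proof. by rewrite -splitr. Qed.

Lemma nz_entry (S : 'M[algC]_2) b : S *m S = D2 (1/2) b -> exists i0 p0, S i0 p0 != 0.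
Proof.
move=> e.
case/boolP: [exists i0, exists p0, S i0 p0 != 0] => [/existsP[i0 /existsP[p0 h]]|H].
  by exists i0, p0.
exfalso; have S0 : S = 0.
  apply/matrixP => i p; rewrite mxE; apply/eqP/negPn/negP => h; move/negP: H; apply.
  by apply/existsP; exists i; apply/existsP; exists p.
move: e; rewrite S0 mul0mx => e.
have := congr1 (fun M : 'M[algC]_2 => M ord0 ord0) e; rewrite /= mxE D2E; simp2 => h.
by move: (gt_eqF half_gt0); rewrite mul1r -h eqxx.
Qed.

Lemma comp_mu (S : 'M[algC]_2) (f g : 'M[algC]_2 -> 'M[algC]_2) (t : algC) :
  S = adj S -> (exists i0 p0, S i0 p0 != 0) -> linmap f -> CP f -> CP g -> 0 < t -> t < 1 ->
  (forall rho, S *m rho *m S = t *: f rho + (1 - t) *: g rho) ->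
  exists mu, forall rho, f rho = mu *: (S *m rho *m S).
Proof.
move=> hS [i0 [p0 nz]] lf cf cg t0 t1 hd.
have hSe : forall a b, (S a b)^* = S b a.
  by move=> a b; rewrite [in RHS]hS /adj !mxE.
have hrel : forall i j p q, (S i p)^* * S j q =
    t * f (delta_mx i j) p q + (1 - t) * g (delta_mx i j) p q.
  move=> i j p q; have := congr1 (fun M : 'M[algC]_2 => M p q) (hd (delta_mx i j)).
  by rewrite /= mul_delta_entry !mxE hSe.
have [mu Hmu] := core (fun i j p q => f (delta_mx i j) p q) (fun i j p q => g (delta_mx i j) p q)
   (fun i p => S i p) t i0 p0 t0 t1 (cf_psd f cf) (cf_psd g cg) hrel nz.
exists mu; apply: lin_ext => //; first exact: linmap_muN.
move=> i j; apply/matrixP => p q; rewrite [RHS]mxE mul_delta_entry -hSe.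
exact: (Hmu i j p q).
Qed.

Lemma inst_uniq (S1 S2 : 'M[algC]_2) (A B : 'I_2 -> 'M[algC]_2 -> 'M[algC]_2) (t : algC) :
  psd S1 -> psd S2 -> S1 *m S1 = P1 -> S2 *m S2 = P2 ->
  instrument A -> instrument B -> 0 < t -> t < 1 ->
  (forall i rho, (let S := if i == ord0 then S1 else S2 in S *m rho *m S) =
                 t *: A i rho + (1 - t) *: B i rho) ->
  forall i rho, A i rho = (let S := if i == ord0 then S1 else S2 in S *m rho *m S).
Proof.
move=> hS1 hS2 e1 e2 [hA hAt] [hB _] t0 t1 hd.
have [mu0 H0] : exists mu, forall rho, A ord0 rho = mu *: (S1 *m rho *m S1).
  apply: (@comp_mu S1 (A ord0) (B ord0) t hS1.1) => //.
  - by apply: (@nz_entry _ 0); rewrite e1 P1D.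
  - exact: (hA ord0).1.
  - exact: (hA ord0).2.
  - exact: (hB ord0).2.
  - by move=> rho; have := hd ord0 rho.
have [mu1 H1] : exists mu, forall rho, A ord_max rho = mu *: (S2 *m rho *m S2).
  apply: (@comp_mu S2 (A ord_max) (B ord_max) t hS2.1) => //.
  - by apply: (@nz_entry _ 1); rewrite e2 P2D.
  - exact: (hA ord_max).1.
  - exact: (hA ord_max).2.
  - exact: (hB ord_max).2.
  - by move=> rho; have := hd ord_max rho.
have T : forall rho, mu0 * \tr (P1 *m rho) + mu1 * \tr (P2 *m rho) = \tr rho.
  move=> rho; rewrite -(hAt rho) sum2 mxtraceD H0 H1 !mxtraceZ !trN e1 e2; done.
have T11 := T (D2 0 1); have T00 := T (D2 1 0).
move: T11 T00; rewrite P1D P2D !D2_mul !D2_tr => T11 T00.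
have m1 : mu1 = 1.
  apply: (etrans _ (etrans T11 _)); cring.
have m0 : mu0 = 1.
  rewrite m1 in T00.
  have E : mu0 * (1/2) + 1/2 = 1.
    by apply: (etrans _ (etrans T00 _)); cring.
  have : (mu0 - 1) * (1/2) = (mu0 * (1/2) + 1/2) - (1/2 + 1/2) by cring.
  rewrite E half_half subrr.
  move/eqP; rewrite mulf_eq0 (gt_eqF half_gt0) orbF subr_eq0 => /eqP //.
move=> i rho; case: (ord2 i) => ->; rewrite /= ?eqxx ?e10.
  by rewrite H0 m0 scale1r.
by rewrite H1 m1 scale1r.
Qed.

Theorem mainTheorem18 :
  ~ extremal_POVM Pfam /\
  (exists S1 S2 : 'M[algC]_2, psd S1 /\ psd S2 /\ S1 *m S1 = P1 /\ S2 *m S2 = P2) /\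
  (forall S1 S2 : 'M[algC]_2,
     psd S1 -> psd S2 -> S1 *m S1 = P1 -> S2 *m S2 = P2 ->
     extremal_instrument
       (fun (i : 'I_2) (rho : 'M[algC]_2) =>
          let S := if i == ord0 then S1 else S2 in S *m rho *m S)).
Proof.
split.
  move=> [_ Hext].
  pose Q := fun i : 'I_2 => if i == ord0 then D2 1 0 else D2 0 1.
  pose R := fun i : 'I_2 => if i == ord0 then D2 0 0 else D2 1 1.
  have hQ : POVM Q.
    split.
      move=> i; rewrite /Q; case: ifP => _; apply: psd_D2; by rewrite ?ler01 ?lexx.
    rewrite sum2 /Q eqxx e10 D2_add D2_1; congr D2; cring.
  have hR : POVM R.
    split.
      move=> i; rewrite /R; case: ifP => _; apply: psd_D2; by rewrite ?ler01 ?lexx.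
    rewrite sum2 /R eqxx e10 D2_add D2_1; congr D2; cring.
  have hh : (1 - 1/2 : algC) = 1/2 by rewrite -{1}half_half addrK.
  have := Hext Q R (1/2) hQ hR half_gt0 half_lt1 _ ord0.
  case.
    move=> i; rewrite /Pfam /Q /R; case: (ord2 i) => ->; rewrite ?eqxx ?e10 ?P1D ?P2D !D2_scale D2_add; congr D2; rewrite ?hh; first [cring | rewrite -[LHS]half_half; cring].
  rewrite /Q /Pfam eqxx P1D => /D2_inj [h _] _.
  by move: half_lt1; rewrite -h ltxx.
split.
  have c0 : 0 <= sqrtC (1/2 : algC) by rewrite sqrtC_ge0 ltW // half_gt0.
  have cc : sqrtC (1/2 : algC) * sqrtC (1/2) = 1/2 by rewrite -expr2 sqrtCK.
  exists (D2 (sqrtC (1/2)) 0), (D2 (sqrtC (1/2)) 1).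
  split; first by apply: psd_D2; rewrite ?lexx.
  split; first by apply: psd_D2; rewrite ?ler01.
  split; rewrite D2_mul cc ?P1D ?P2D; congr D2; cring.
move=> S1 S2 hS1 hS2 e1 e2.
have instN : instrument (fun (i : 'I_2) (rho : 'M[algC]_2) =>
          let S := if i == ord0 then S1 else S2 in S *m rho *m S).
  split.
    move=> i; case: (ord2 i) => ->; rewrite /= ?eqxx ?e10; split;
      (apply: linmap_N || apply: CP_N; by [case: hS1 | case: hS2]).
  move=> rho; rewrite sum2 /= ?eqxx ?e10 mxtraceD !trN e1 e2 -mxtraceD -mulmxDl.
  by rewrite P1D P2D D2_add half_half add0r -D2_1 mul1mx.
split; first exact: instN.
move=> A B t hA hB t0 t1 hd i rho.
have HA := inst_uniq S1 S2 A B t hS1 hS2 e1 e2 hA hB t0 t1 hd.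
split; first exact: HA.
have t0' : 0 < 1 - t by rewrite subr_gt0.
have t1' : 1 - t < 1 by rewrite ltrBlDr ltrDl.
apply: (inst_uniq S1 S2 B A (1 - t) hS1 hS2 e1 e2 hB hA t0' t1') => j r.
rewrite hd addrC; congr (_ + _ *: _); cring.
Qed.
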